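(* Consider an episode in which the first event is an original post with probability $\alpha\in[0,1]$ and a repost with probability $1-\alpha$, the number of segments is $1+S$ with $S\sim\mathrm{Pois}(\gamma)$, $\gamma\ge0$, the segments alternate in type (original-post segment, repost segment, ...) starting with the type of the first event, and, independently, each original-post segment contains $1+\mathrm{Pois}(\mu_1)$ events and each repost segment contains $1+\mathrm{Pois}(\mu_0)$ events ($\mu_1,\mu_0\ge0$). Then the expected total number of events in the episode equals $$\frac12(2+\mu_1+\mu_0)(\gamma+1)+c(\gamma,\alpha)(\mu_1-\mu_0),\qquad c(\gamma,\alpha)=e^{-\gamma}\Big(\alpha-\frac12\Big)\sum_{k=0}^\infty\frac{\gamma^{2k}}{(2k)!}.$$
   Context: An episode is a cluster of posts consisting of consecutive segments; a segment is a maximal run of events of the same type (original post or repost). *)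

(* Defs.v *)
From HB Require Import structures.
From mathcomp Require Import all_boot all_order all_algebra.
From mathcomp Require Import all_classical all_reals all_analysis.
Set Implicit Arguments. Unset Strict Implicit. Unset Printing Implicit Defensive.
Import Order.TTheory GRing.Theory Num.Theory.
Local Open Scope ring_scope.

Section Episode.
Variable R : realType.

Definition pois (l : R) (k : nat) : R := expR (- l) * l ^+ k / (k`!)%:R.

(* Outcome of an episode: (b, s) where b = true iff the first event is an
   original post, size s = 1 + S is the number of segments, and s`_i is the
   Poisson "extra" count of segment i (segment i has 1 + s`_i events). *)
Definition seg_type (b : bool) (i : nat) : bool := b (+) odd i.

Definition episode_pmf (alpha gamma mu1 mu0 : R) (w : bool * seq nat) : R :=
  let: (b, s) := w in
  if s is [::] then 0 else
  (if b then alpha else 1 - alpha) * pois gamma (size s).-1 *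
  \prod_(i < size s) pois (if seg_type b i then mu1 else mu0) (nth 0%N s i).

Definition episode_size (w : bool * seq nat) : nat := (size w.2 + sumn w.2)%N.

Definition expected_episode_size (alpha gamma mu1 mu0 : R) : \bar R :=
  \esum_(w in [set: bool * seq nat])
    (episode_pmf alpha gamma mu1 mu0 w * (episode_size w)%:R)%:E.

Definition c_coef (gamma alpha : R) : R :=
  expR (- gamma) * (alpha - 2^-1) *
  limn (fun n => \sum_(k < n) gamma ^+ (2 * k) / ((2 * k)`!)%:R).

End Episode.

(* Main.v *)
Require Import Defs.
From HB Require Import structures.
From mathcomp Require Import all_boot all_order all_algebra.
From mathcomp Require Import all_classical all_reals all_analysis.
From mathcomp Require Import ring lra.
Import Order.TTheory GRing.Theory Num.Theory.
Import numFieldNormedType.Exports.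
Local Open Scope ring_scope.
Local Open Scope classical_set_scope.
Section R.
Variable R : realType.

Lemma pois_ge0 (l : R) k : 0 <= l -> 0 <= pois l k.
Proof. by move=> l0; rewrite /pois divr_ge0 // mulr_ge0 ?expR_ge0 ?exprn_ge0. Qed.

Lemma poisE (l : R) : pois l = fun k => expR (- l) * exp_coeff l k.
Proof. by apply/funext => k; rewrite /pois /exp_coeff /= mulrA. Qed.

Lemma cvg_expc (x : R) : series (exp_coeff x) @ \oo --> expR x.
Proof. exact: (is_cvg_series_exp_coeff x). Qed.

Lemma seriesMl (c : R) (f : nat -> R) :
  series (fun k => c * f k) = (fun n => c * series f n).
Proof. by apply/funext => n; rewrite /series /= mulr_sumr. Qed.

Lemma cvg_seriesZ (c : R) f (l : R) : series f @ \oo --> l ->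
  series (fun k => c * f k) @ \oo --> c * l.
Proof. by move=> H; rewrite seriesMl; apply: cvgMr. Qed.

Lemma pois_cvg1 (l : R) : series (pois l) @ \oo --> (1 : R).
Proof.
rewrite poisE seriesMl -(expRxMexpNx_1 l) mulrC.
by apply: cvgMr; exact: cvg_expc.
Qed.

Lemma series_shift (f : nat -> R) n :
  series f n.+1 = f 0%N + series (fun k => f k.+1) n.
Proof.
by rewrite /series /= big_nat_recl.
Qed.

Lemma pois_mean (l : R) :
  series (fun k => pois l k * k%:R) @ \oo --> l.
Proof.
rewrite -cvg_shiftS /=.
have -> : (fun n => series (fun k => pois l k * k%:R) n.+1) =
   (fun n => l * series (pois l) n).
  apply/funext => n; rewrite series_shift mulr0 add0r.
  transitivity (series (fun k => l * pois l k) n); last by rewrite seriesMl.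
  congr (series _ n); apply/funext => k.
  rewrite /pois factS natrM exprS.
  have h : (k.+1%:R : R) != 0 by rewrite pnatr_eq0.
  have h2 : (k`!%:R : R) != 0 by rewrite pnatr_eq0 -lt0n fact_gt0.
  have h1 : (1 + k%:R : R) != 0 by rewrite addrC natr1.
  by field; rewrite h2 h1.
have H := pois_cvg1 l.
have := @cvgMr _ _ _ _ _ l _ H. rewrite mulr1. apply.
Qed.

Lemma expc_even (g : R) j :
  exp_coeff g j + exp_coeff (- g) j = 2 * (~~ odd j)%:R * exp_coeff g j.
Proof.
rewrite /exp_coeff /= exprNn -signr_odd.
by case: (odd j) => /=; rewrite ?expr1 ?expr0; ring.
Qed.

Definition Ev (g : R) n := \sum_(k < n) g ^+ (2 * k)%N / ((2 * k)%N`!)%:R.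

Lemma Ev_series (g : R) n :
  series (fun j => exp_coeff g j + exp_coeff (- g) j) (2 * n)%N = 2 * Ev g n.
Proof.
elim: n => [|n IH]; first by rewrite /Ev /series /= big_ord0 big_geq // mulr0.
rewrite mulnS add2n !seriesSr IH /Ev big_ord_recr /= !expc_even.
rewrite oddS oddM /= mulr0 mul0r addr0.
rewrite /exp_coeff /=. ring.
Qed.

Lemma Ev_cvg (g : R) : Ev g n @[n --> \oo] --> (expR g + expR (- g)) / 2.
Proof.
have -> : Ev g = (fun n => 2^-1 * series (fun j => exp_coeff g j + exp_coeff (- g) j) (2 * n)%N).
  by apply/funext => n; rewrite Ev_series mulrA mulVf ?mul1r // pnatr_eq0.
rewrite mulrC; apply: cvgMr.
have K : series (fun j => exp_coeff g j + exp_coeff (- g) j) @ \oo --> expR g + expR (- g).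
  by rewrite seriesD; apply: cvgD; exact: cvg_expc.
have K2 := cvg_comp _ _ (@cvg_mulnl 2 isT) K. exact: K2.
Qed.

Lemma pois_even (g : R) :
  series (fun j => pois g j * (~~ odd j)%:R) @ \oo --> expR (- g) * limn (Ev g).
Proof.
rewrite (cvg_lim _ (Ev_cvg g)) //.
have -> : (fun j => pois g j * (~~ odd j)%:R) =
   (fun j => (expR (- g) / 2) * (exp_coeff g j + exp_coeff (- g) j)).
  apply/funext => j; rewrite expc_even poisE.
  by field.
rewrite mulrA mulrAC.
apply: cvg_seriesZ; rewrite seriesD; apply: cvgD; exact: cvg_expc.
Qed.

Local Open Scope ereal_scope.

Lemma esumZl {T : choiceType} (I : set T) (a : T -> \bar R) (c : R) :
  (0 <= c)%R -> (forall i, 0 <= a i) ->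
  \esum_(i in I) (c%:E * a i) = c%:E * \esum_(i in I) a i.
Proof.
move=> c0 a0; rewrite /esum -ereal_supZl //; last first.
  apply/set0P; exists 0; exists set0; first exact: fsets_set0.
  by rewrite fsbig_set0.
congr ereal_sup; apply/seteqP; split => x /=.
- case=> A fA <-; exists (\sum_(i \in A) a i); first by exists A.
  by rewrite ge0_mule_fsumr.
- case=> y [A fA <-] <-; exists A => //.
  by rewrite ge0_mule_fsumr.
Qed.

Lemma nneseries_EFin (r : nat -> R) (l : R) : series r @ \oo --> l ->
  \sum_(n <oo) (r n)%:E = l%:E.
Proof.
move=> H.
have -> : (fun N => \sum_(0 <= n < N) (r n)%:E) = EFin \o series r.
  by apply/funext => N; rewrite /= sumEFin.
rewrite EFin_lim ?(cvg_lim _ H) //; exact: cvgP H.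
Qed.

Lemma esum_pois (l c : R) : (0 <= l)%R -> (0 <= c)%R ->
  \esum_(x in [set: nat]) (pois l x * (c + x%:R))%:E = (c + l)%:E.
Proof.
move=> l0 c0; rewrite -nneseries_esumT; last first.
  by move=> n; rewrite lee_fin mulr_ge0 ?pois_ge0 ?addr_ge0.
apply: nneseries_EFin.
have -> : (fun x => pois l x * (c + x%:R))%R =
  (fun x => c * pois l x + pois l x * x%:R)%R.
  by apply/funext => x; rewrite mulrDr mulrC.
rewrite seriesD; apply: cvgD; last exact: pois_mean.
by rewrite -[X in _ --> X]mulr1; apply: cvg_seriesZ; exact: pois_cvg1.
Qed.

Lemma inner n : forall (m : nat -> R) (a : R), (forall i, 0 <= m i)%R -> (0 <= a)%R ->
  \esum_(s in [set s : seq nat | size s = n])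
     ((\prod_(i < n) pois (m i) (nth 0%N s i)) * (a + (sumn s)%:R))%:E
  = (a + \sum_(i < n) m i)%:E.
Proof.
elim: n => [|n IH] m a m0 a0.
  have -> : [set s : seq nat | size s = 0%N] = [set [::]].
    by apply/seteqP; split => s /=; [move/size0nil | move=> ->].
  rewrite esum_set1 /= ?big_ord0 ?mul1r ?addr0 //.
have -> : [set s : seq nat | size s = n.+1] =
    (fun p : nat * seq nat => p.1 :: p.2) @` ([set: nat] `*` [set s | size s = n]).
  apply/seteqP; split => s /=.
    case: s => [//|x t] /= [Ht]; exists (x, t) => //.
  by case=> [[x t]] [_ /= Ht] <-; rewrite /= Ht.
rewrite esum_image; last by move=> [x t] [y u] _ _ /= [-> ->].
transitivity (\esum_(x in [set: nat]) \esum_(t in [set s : seq nat | size s = n])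
   ((\prod_(i < n.+1) pois (m i) (nth 0%N (x :: t) i)) * (a + (sumn (x :: t))%:R))%:E).
  rewrite esum_esum //.
  move=> x t _ _; rewrite lee_fin mulr_ge0 ?addr_ge0 //.
  by apply: prodr_ge0 => i _; apply: pois_ge0.
transitivity (\esum_(x in [set: nat]) ((pois (m 0%N) x)%:E *
  \esum_(t in [set s : seq nat | size s = n])
   ((\prod_(i < n) pois (m i.+1) (nth 0%N t i)) * ((a + x%:R) + (sumn t)%:R))%:E)).
  apply: eq_esum => x _; rewrite -esumZl; last first.
  - move=> t; rewrite lee_fin mulr_ge0 ?addr_ge0 //.
    by apply: prodr_ge0 => i _; apply: pois_ge0.
  - exact: pois_ge0.
  apply: eq_esum => t _; rewrite -EFinM big_ord_recl /=.
  rewrite natrD addrA mulrA; congr ((_ * _) * _)%:E.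
transitivity (\esum_(x in [set: nat]) (pois (m 0%N) x * ((a + \sum_(i < n) m i.+1) + x%:R))%:E).
  apply: eq_esum => x _; rewrite (IH (fun i => m i.+1)) //; last by rewrite addr_ge0.
  by rewrite -EFinM; congr (_ * _)%:E; rewrite addrAC.
rewrite esum_pois //; last by rewrite addr_ge0 // sumr_ge0.
by rewrite big_ord_recl; congr EFin; ring.
Qed.

Definition mb (mu1 mu0 : R) b i := if seg_type b i then mu1 else mu0.
Definition sgnb (b : bool) : R := if b then 1%R else (-1)%R.

Lemma seg_sum (mu1 mu0 : R) b n :
  (\sum_(i < n) mb mu1 mu0 b i)%R =
  ((n%:R * (mu1 + mu0) + sgnb b * (odd n)%:R * (mu1 - mu0)) / 2)%R.
Proof.
elim: n => [|n IH]; first by rewrite big_ord0 /=; field.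
rewrite big_ord_recr /= IH /mb /seg_type -natr1 /sgnb. clear IH.
by case: b; case: (odd n) => /=; field.
Qed.

Lemma pmf_ge0 (alpha gamma mu1 mu0 : R) w : (0 <= alpha)%R -> (alpha <= 1)%R ->
  (0 <= gamma)%R -> (0 <= mu1)%R -> (0 <= mu0)%R ->
  (0 <= episode_pmf alpha gamma mu1 mu0 w)%R.
Proof.
move=> a0 a1 g0 m1 m0; case: w => b [|x t] //=.
apply: mulr_ge0; first apply: mulr_ge0.
- by case: b; rewrite ?subr_ge0.
- exact: pois_ge0.
apply: prodr_ge0 => i _; apply: pois_ge0; by case: ifP.
Qed.

Definition wb (alpha : R) (b : bool) := if b then alpha else (1 - alpha)%R.

Lemma esum_b (alpha gamma mu1 mu0 : R) b : (0 <= alpha)%R -> (alpha <= 1)%R ->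
  (0 <= gamma)%R -> (0 <= mu1)%R -> (0 <= mu0)%R ->
  \esum_(s in [set: seq nat])
    (episode_pmf alpha gamma mu1 mu0 (b, s) * (episode_size (b, s))%:R)%:E =
  (wb alpha b * ((1 + (mu1 + mu0) / 2) * gamma + (1 + (mu1 + mu0) / 2) * 1
     + (sgnb b / 2 * (mu1 - mu0)) * (expR (- gamma) * limn (Ev gamma))))%:E.
Proof.
move=> a0 a1 g0 m1 m0.
have wb0 : (0 <= wb alpha b)%R by rewrite /wb; case: (b); rewrite ?subr_ge0.
have h0 : forall s, 0 <= (episode_pmf alpha gamma mu1 mu0 (b, s) * (episode_size (b, s))%:R)%:E.
  by move=> s; rewrite lee_fin mulr_ge0 ?pmf_ge0.
have -> : [set: seq nat] = \bigcup_(n in [set: nat]) [set s : seq nat | size s = n].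
  by apply/seteqP; split => s // _; exists (size s).
rewrite esum_bigcupT //; last by move=> i j _ _ [s [/= <- <-]].
rewrite -nneseries_esumT; last by move=> n; apply: esum_ge0.
pose r n := if n is k.+1 then (wb alpha b * pois gamma k *
   (n%:R + (\sum_(i < n) mb mu1 mu0 b i)%R))%R else 0%R.
transitivity (\sum_(n <oo) (r n)%:E).
  apply: eq_eseriesr => n _; case: n => [|k].
    apply: esum1 => s /= /size0nil -> /=; by rewrite mul0r.
  transitivity (\esum_(s in [set s : seq nat | size s = k.+1])
     ((wb alpha b * pois gamma k)%:E * ((\prod_(i < k.+1) pois (mb mu1 mu0 b i) (nth 0%N s i)) * (k.+1%:R + (sumn s)%:R))%:E)).
    apply: eq_esum => s /= Hs.
    rewrite -EFinM; congr EFin.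
    case: s Hs => // x t Hs; rewrite /episode_pmf /episode_size Hs /= -Hs natrD.
    by rewrite /wb /mb !mulrA.
  rewrite esumZl; last first.
  - move=> s; rewrite lee_fin mulr_ge0 ?addr_ge0 //.
    by apply: prodr_ge0 => i _; apply: pois_ge0; rewrite /mb; case: ifP.
  - by rewrite mulr_ge0 // pois_ge0.
  rewrite inner //; last by move=> i; rewrite /mb; case: ifP.
apply: nneseries_EFin.
rewrite -cvg_shiftS /=.
have -> : (fun n => series r n.+1) = series (fun k =>
   wb alpha b * ((1 + (mu1 + mu0) / 2) * (pois gamma k * k%:R) +
     (1 + (mu1 + mu0) / 2) * pois gamma k +
     (sgnb b / 2 * (mu1 - mu0)) * (pois gamma k * (~~ odd k)%:R)))%R.
  apply/funext => n; rewrite series_shift /= add0r; congr (series _ n).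
  apply/funext => k; rewrite seg_sum /= -natr1.
  by case: (odd k) => /=; field.
apply: cvg_seriesZ; rewrite !seriesD; apply: cvgD; first apply: cvgD.
- by apply: cvg_seriesZ; exact: pois_mean.
- by apply: cvg_seriesZ; exact: pois_cvg1.
- by apply: cvg_seriesZ; exact: pois_even.
Qed.
End R.

Theorem mainTheorem4 (R : realType) (alpha gamma mu1 mu0 : R)
  (halpha0 : 0 <= alpha) (halpha1 : alpha <= 1) (hgamma : 0 <= gamma)
  (hmu1 : 0 <= mu1) (hmu0 : 0 <= mu0) :
  expected_episode_size alpha gamma mu1 mu0 =
  (2^-1 * (2 + mu1 + mu0) * (gamma + 1) + c_coef gamma alpha * (mu1 - mu0))%:E.
Proof.
rewrite /expected_episode_size -setXTT.
transitivity (\esum_(b in [set: bool]) \esum_(s in [set: seq nat])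
   (episode_pmf alpha gamma mu1 mu0 (b, s) * (episode_size (b, s))%:R)%:E).
  rewrite esum_esum; first by apply: eq_esum => -[b s] _.
  by move=> b s _ _; rewrite lee_fin mulr_ge0 ?pmf_ge0.
rewrite (esumID [set true]); last by move=> b _; apply: esum_ge0 => s _; rewrite lee_fin mulr_ge0 ?pmf_ge0.
rewrite setTI.
have -> : [set: bool] `&` ~` [set true] = [set false].
  by apply/seteqP; split => -[] //=; case.
rewrite !esum_set1; last 2 first.
- by apply: esum_ge0 => s _; rewrite lee_fin mulr_ge0 ?pmf_ge0.
- by apply: esum_ge0 => s _; rewrite lee_fin mulr_ge0 ?pmf_ge0.
rewrite !esum_b // -EFinD; congr EFin.
have -> : c_coef gamma alpha = expR (- gamma) * (alpha - 2^-1) * limn (Ev R gamma) by [].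
rewrite /wb /sgnb; by field.
Qed.
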